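(* Let $X$ be as in the context. If $\liminf_{x\to\infty}H_1(x)>1$, then $X$ is transient.
   Context: Let $\mathbb S\subseteq\mathbb Z_{\ge0}$ be an infinite set and let $X$ be an irreducible continuous-time Markov chain on $\mathbb S$ whose generator acts on functions $f:\mathbb S\to\mathbb R$ by $\mathcal A f(x)=\sum_{\eta\in\mathbb Z}\lambda_\eta(x)\big(f(x+\eta)-f(x)\big)$, where $\lambda_\eta(x)$ is the rate of the jump $x\to x+\eta$ (and $\lambda_\eta(x)=0$ whenever $x+\eta\notin\mathbb S$). Standing assumption: (a) there is a finite set $\Gamma\subset\mathbb Z$ such that $\lambda_\eta\equiv0$ for $\eta\notin\Gamma$; (b) $0\le\lambda_\eta(x)<\infty$ for all $x,\eta$. Define $m(x)=\sum_{\eta}\eta\,\lambda_\eta(x)$, $v(x)=\frac12\sum_\eta\eta^2\lambda_\eta(x)$ (positive on $\mathbb S$), and for $x>1$, $H_1(x)=\dfrac{(\log x)(m(x)x-v(x))}{v(x)}$. *)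

(* Defs.v *)
From Stdlib Require Import Reals ZArith List Lra.
From Coquelicot Require Import Coquelicot.
Open Scope R_scope.

(* States are integers; the state space S is a predicate on Z contained in Z_{>=0}.
   Rates: lam eta x = rate of the jump x -> x + eta.
   Gamma : list Z is a finite (duplicate-free) list outside of which all rates vanish. *)

Fixpoint sumL (l : list Z) (f : Z -> R) : R :=
  match l with nil => 0 | cons e l' => f e + sumL l' f end.

Definition drift (Gamma : list Z) (lam : Z -> Z -> R) (x : Z) : R :=
  sumL Gamma (fun eta => IZR eta * lam eta x).

Definition halfvar (Gamma : list Z) (lam : Z -> Z -> R) (x : Z) : R :=
  / 2 * sumL Gamma (fun eta => (IZR eta) ^ 2 * lam eta x).

Definition H1 (Gamma : list Z) (lam : Z -> Z -> R) (x : Z) : R :=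
  ln (IZR x) * (drift Gamma lam x * IZR x - halfvar Gamma lam x) / halfvar Gamma lam x.

Definition qrate (Gamma : list Z) (lam : Z -> Z -> R) (x : Z) : R :=
  sumL Gamma (fun eta => if Z.eq_dec eta 0 then 0 else lam eta x).

(* hitF n y = probability that the embedded jump chain started at y visits
   the target state x at some step in {1,...,n}.  Transition probabilities of
   the jump chain: P(y, y+eta) = lam eta y / q(y), eta <> 0. *)
Fixpoint hitF (Gamma : list Z) (lam : Z -> Z -> R) (x : Z) (n : nat) (y : Z) : R :=
  match n with
  | O => 0
  | S n' =>
      sumL Gamma (fun eta =>
        if Z.eq_dec eta 0 then 0 else
        lam eta y / qrate Gamma lam y *
        (if Z.eq_dec (y + eta)%Z x then 1 else hitF Gamma lam x n' (y + eta)%Z))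
  end.

Definition return_prob (Gamma : list Z) (lam : Z -> Z -> R) (x : Z) : Rbar :=
  Lim_seq (fun n => hitF Gamma lam x n x).

Definition transient (S : Z -> Prop) (Gamma : list Z) (lam : Z -> Z -> R) : Prop :=
  forall x, S x -> Rbar_lt (return_prob Gamma lam x) (Finite 1).

Inductive reach (lam : Z -> Z -> R) (x : Z) : Z -> Prop :=
  | reach_refl : reach lam x x
  | reach_step : forall y eta, reach lam x y -> eta <> 0%Z -> 0 < lam eta y ->
                   reach lam x (y + eta)%Z.

Definition irreducible (S : Z -> Prop) (lam : Z -> Z -> R) : Prop :=
  forall x y, S x -> S y -> reach lam x y.

(* Main.v *)
Require Import Defs.
From Stdlib Require Import Reals ZArith List Lra Psatz Classical.
From Coquelicot Require Import Coquelicot.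
Open Scope R_scope.

Lemma ln1p_le (u : R) : -1 < u -> ln (1 + u) <= u.
Proof.
  intro H. rewrite <- (ln_exp u) at 2. apply ln_le. lra. apply exp_ineq1_le.
Qed.

Lemma ln1p_ge_pos (u : R) : 0 <= u -> u - u^2/2 <= ln (1 + u).
Proof.
  intro H. destruct (Req_dec u 0) as [->|Hn].
  { replace (1+0) with 1 by ring. rewrite ln_1. lra. }
  set (h := fun t => ln (1 + t) - t + t^2/2).
  destruct (MVT_cor2 h (fun t => / (1 + t) - 1 + t) 0 u) as [c [Hc1 Hc2]]; [lra| |].
  { intros c Hc. apply is_derive_Reals. unfold h. auto_derive. lra. field. lra. }
  unfold h in Hc1. replace (1+0) with 1 in Hc1 by ring. rewrite ln_1 in Hc1.
  assert (0 < / (1 + c) - 1 + c).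
  { replace (/ (1 + c) - 1 + c) with (c^2 / (1+c)) by (field; lra).
    apply Rdiv_lt_0_compat; nra. }
  nra.
Qed.

Lemma ln1p_ge_neg (u : R) : -1/2 <= u <= 0 -> u - u^2/2 + u^3 <= ln (1 + u).
Proof.
  intro H. destruct (Req_dec u 0) as [->|Hn].
  { replace (1+0) with 1 by ring. rewrite ln_1. lra. }
  set (h := fun t => ln (1 + t) - t + t^2/2 - t^3).
  destruct (MVT_cor2 h (fun t => / (1 + t) - 1 + t - 3 * t^2) u 0) as [c [Hc1 Hc2]]; [lra| |].
  { intros c Hc. apply is_derive_Reals. unfold h. auto_derive. lra. field. lra. }
  unfold h in Hc1. replace (1+0) with 1 in Hc1 by ring. rewrite ln_1 in Hc1.
  assert (/ (1 + c) - 1 + c - 3 * c^2 < 0).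
  { replace (/ (1 + c) - 1 + c - 3 * c^2) with (c^2 * (-2 - 3*c) / (1+c)) by (field; lra).
    unfold Rdiv. assert (0 < / (1+c)) by (apply Rinv_0_lt_compat; lra).
    assert (0 < c^2) by nra. assert (c^2 * (-2 - 3*c) < 0) by nra.
    assert (c^2 * (-2 - 3*c) * / (1+c) < 0) by nra. lra. }
  nra.
Qed.

Lemma lnb (u k : R) : 0 <= k <= 1/2 -> -k <= u <= k ->
  u - u^2*(1/2+k) <= ln (1+u) <= u /\ ln (1+u)^2 <= u^2*(1+k)^2.
Proof.
  intros Hk Hu.
  assert (Hup : ln (1+u) <= u) by (apply ln1p_le; lra).
  assert (Hlo : u - u^2*(1/2+k) <= ln (1+u)).
  { destruct (Rle_dec 0 u).
    - pose proof (ln1p_ge_pos u r). nra.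
    - pose proof (ln1p_ge_neg u ltac:(lra)). nra. }
  split; [lra|].
  destruct (Rle_dec 0 u).
  - assert (0 <= ln (1+u)) by nra. nra.
  - assert (ln (1+u) < 0) by lra.
    assert (- ln (1+u) <= - u * (1 + k)) by nra.
    nra.
Qed.

Lemma core (y e K : R) : 0 < y -> 1 <= ln y -> 1 <= ln (ln y) -> Rabs e <= K -> K/y <= 1/8 ->
  / ln (ln (y+e)) - / ln (ln y) <=
  - (e/y) / (ln y * ln (ln y)^2) + (e/y)^2 * ((1/2+K/y)/(ln y*ln (ln y)^2)
     + (1/2+2*(K/y))*(1+K/y)^2/(ln y^2*ln (ln y)^2) + 8*(1+K/y)^2/(ln y^2*ln (ln y)^3)).
Proof.
  intros Hy HL HLam He Hk.
  set (L := ln y) in *. set (Lam := ln L) in *. set (u := e/y). set (k := K/y) in *.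
  assert (Hk0 : 0 <= k) by (unfold k; pose proof (Rabs_pos e); apply Rmult_le_pos; [lra| left; apply Rinv_0_lt_compat; lra]).
  assert (Hu : -k <= u <= k).
  { assert (-K <= e <= K).
    { pose proof (Rle_abs e). pose proof (Rle_abs (-e)). rewrite Rabs_Ropp in H0. lra. }
    unfold u, k, Rdiv. assert (0 < / y) by (apply Rinv_0_lt_compat; lra). nra. }
  assert (Hk8 : k <= 1/8) by exact Hk.
  destruct (lnb u k ltac:(lra) Hu) as [[Hl1 Hl2] Hl3].
  set (l := ln (1+u)) in *.
  assert (Hye : y + e = y * (1+u)) by (unfold u; field; lra).
  assert (H1u : 0 < 1 + u) by lra.
  assert (HlnYe : ln (y+e) = L + l) by (rewrite Hye, ln_mult; [reflexivity|lra|lra]).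
  assert (Hlb : -2*k <= l <= 2*k) by nra.
  set (r := l / L).
  assert (HL0 : 0 < L) by lra.
  assert (Hr : -2*k <= r <= 2*k).
  { unfold r, Rdiv. assert (0 < / L) by (apply Rinv_0_lt_compat; lra).
    assert (/ L <= 1) by (rewrite <- Rinv_1; apply Rinv_le_contravar; lra). nra. }
  assert (HLl : L + l = L * (1 + r)) by (unfold r; field; lra).
  destruct (lnb r (2*k) ltac:(lra) ltac:(lra)) as [[Hw1 Hw2] Hw3].
  set (w := ln (1 + r)) in *.
  assert (HlnL : ln (ln (y+e)) = Lam + w) by (rewrite HlnYe, HLl, ln_mult; [reflexivity|lra|lra]).
  rewrite HlnL.
  assert (HLam0 : 0 < Lam) by lra.
  assert (Hwb : - Lam / 2 <= w) by nra.
  assert (E : / (Lam + w) - / Lam = - w / Lam^2 + w^2 * / (Lam + w) / Lam^2) by (field; lra).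
  rewrite E. clear E.
  assert (HA : / (Lam + w) <= 2 / Lam).
  { apply (Rmult_le_reg_l (Lam + w)); [lra|]. rewrite Rinv_r by lra.
    unfold Rdiv. rewrite <- Rmult_assoc.
    assert (Lam * / Lam = 1) by (field; lra).
    assert ((Lam + w) * 2 * / Lam = 2 + 2 * w * / Lam) by (field; lra). rewrite H0.
    assert (0 < / Lam) by (apply Rinv_0_lt_compat; lra). nra. }
  assert (HA0 : 0 < / (Lam + w)) by (apply Rinv_0_lt_compat; lra).
  assert (Hw4 : w^2 <= 4 * r^2) by nra.
  assert (Ha : w^2 * / (Lam + w) <= 8 * r^2 / Lam).
  { apply Rle_trans with (4 * r^2 * (2 / Lam)).
    - apply Rmult_le_compat; try nra. 
    - right. field. lra. }
  assert (Hc : r^2 <= u^2 * (1+k)^2 / L^2).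
  { unfold r. replace ((l/L)^2) with (l^2 / L^2) by (field; lra).
    unfold Rdiv. apply Rmult_le_compat_r; [|exact Hl3].
    left. apply Rinv_0_lt_compat. nra. }
  assert (Hd : - r <= (- u + u^2 * (1/2 + k)) / L).
  { unfold r. replace (- (l / L)) with ((- l) / L) by (field; lra). unfold Rdiv.
    apply Rmult_le_compat_r. left; apply Rinv_0_lt_compat; lra. lra. }
  assert (HL2 : 0 < / Lam^2) by (apply Rinv_0_lt_compat; nra).
  assert (Hstep1 : - w / Lam^2 + w^2 * / (Lam + w) / Lam^2 <=
                   (- r + r^2 * (1/2 + 2*k)) / Lam^2 + 8 * r^2 / Lam / Lam^2).
  { unfold Rdiv at 1 2 3 4. apply Rplus_le_compat.
    - apply Rmult_le_compat_r; lra.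
    - apply Rmult_le_compat_r; lra. }
  eapply Rle_trans; [exact Hstep1|].
  assert (Hstep2 : (- r + r^2 * (1/2 + 2*k)) / Lam^2 + 8 * r^2 / Lam / Lam^2 <=
     ((- u + u^2 * (1/2 + k)) / L + u^2 * (1+k)^2 / L^2 * (1/2 + 2*k)) / Lam^2
      + 8 * (u^2 * (1+k)^2 / L^2) / Lam / Lam^2).
  { unfold Rdiv at 1 3 4 7. apply Rplus_le_compat.
    - apply Rmult_le_compat_r; [lra|]. apply Rplus_le_compat; [lra|].
      apply Rmult_le_compat_r; lra.
    - apply Rmult_le_compat_r; [lra|]. apply Rmult_le_compat_r.
      left; apply Rinv_0_lt_compat; lra. lra. }
  eapply Rle_trans; [exact Hstep2|].
  right. field. split; lra.
Qed.

Lemma sumL_le (l : list Z) (f g : Z -> R) :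
  (forall e, In e l -> f e <= g e) -> sumL l f <= sumL l g.
Proof.
  induction l as [|a l IH]; simpl; intros H. lra.
  apply Rplus_le_compat. apply H; auto. apply IH; intros; apply H; auto.
Qed.

Lemma sumL_ext (l : list Z) (f g : Z -> R) :
  (forall e, In e l -> f e = g e) -> sumL l f = sumL l g.
Proof.
  induction l as [|a l IH]; simpl; intros H. lra.
  rewrite H by auto. rewrite IH; auto.
Qed.

Lemma sumL_plus (l : list Z) (f g : Z -> R) :
  sumL l (fun e => f e + g e) = sumL l f + sumL l g.
Proof. induction l; simpl; [lra|]. rewrite IHl. ring. Qed.

Lemma sumL_minus (l : list Z) (f g : Z -> R) :
  sumL l (fun e => f e - g e) = sumL l f - sumL l g.
Proof. induction l; simpl; [lra|]. rewrite IHl. ring. Qed.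

Lemma sumL_scal (l : list Z) (f : Z -> R) (c : R) :
  sumL l (fun e => f e * c) = sumL l f * c.
Proof. induction l; simpl; [lra|]. rewrite IHl. ring. Qed.

Lemma sumL_nonneg (l : list Z) (f : Z -> R) :
  (forall e, In e l -> 0 <= f e) -> 0 <= sumL l f.
Proof.
  intros H. apply Rle_trans with (sumL l (fun _ => 0)).
  - clear H. induction l; simpl; lra.
  - apply sumL_le. auto.
Qed.

Lemma sumL_single (l : list Z) (f : Z -> R) (e : Z) :
  In e l -> (forall e', In e' l -> 0 <= f e') -> f e <= sumL l f.
Proof.
  induction l as [|a l IH]; simpl; intros Hin H. contradiction.
  destruct Hin as [->|Hin].
  - assert (0 <= sumL l f) by (apply sumL_nonneg; auto). pose proof (H e (or_introl eq_refl)). lra.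
  - assert (f e <= sumL l f) by (apply IH; auto). pose proof (H a (or_introl eq_refl)). lra.
Qed.

Section Prob.
Variables (Gamma : list Z) (lam : Z -> Z -> R).
Hypothesis hlam_nonneg : forall eta x, 0 <= lam eta x.
Hypothesis hGamma : forall eta x, ~ In eta Gamma -> lam eta x = 0.

Lemma q_nonneg y : 0 <= qrate Gamma lam y.
Proof. unfold qrate. apply sumL_nonneg. intros e _. destruct Z.eq_dec; [lra|auto]. Qed.

Lemma inv_q_nonneg y : 0 <= / qrate Gamma lam y.
Proof.
  destruct (q_nonneg y) as [H|H].
  - left. apply Rinv_0_lt_compat; auto.
  - rewrite <- H, Rinv_0. lra.
Qed.

Lemma sum_p y : sumL Gamma (fun e => if Z.eq_dec e 0 then 0 else lam e y / qrate Gamma lam y)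
   = qrate Gamma lam y * / qrate Gamma lam y.
Proof.
  unfold qrate at 2. rewrite <- sumL_scal. apply sumL_ext. intros e _.
  destruct Z.eq_dec; unfold Rdiv; ring.
Qed.

Lemma sum_p_le y : sumL Gamma (fun e => if Z.eq_dec e 0 then 0 else lam e y / qrate Gamma lam y) <= 1.
Proof.
  rewrite sum_p. destruct (q_nonneg y) as [H|H].
  - rewrite Rinv_r; lra.
  - rewrite <- H. lra.
Qed.

Lemma sum_p_1 y : 0 < qrate Gamma lam y ->
  sumL Gamma (fun e => if Z.eq_dec e 0 then 0 else lam e y / qrate Gamma lam y) = 1.
Proof. intro H. rewrite sum_p. field. lra. Qed.

Lemma hit_bounds x n y : 0 <= hitF Gamma lam x n y <= 1.
Proof.
  revert y. induction n as [|n IH]; intros y; simpl. lra.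
  split.
  - apply sumL_nonneg. intros e _. destruct Z.eq_dec; [lra|].
    apply Rmult_le_pos. apply Rmult_le_pos; auto using inv_q_nonneg.
    destruct Z.eq_dec; [lra|apply IH].
  - eapply Rle_trans; [|apply (sum_p_le y)]. apply sumL_le. intros e _.
    destruct Z.eq_dec; [lra|].
    assert (0 <= lam e y / qrate Gamma lam y) by (apply Rmult_le_pos; auto using inv_q_nonneg).
    assert (0 <= (if Z.eq_dec (y + e) x then 1 else hitF Gamma lam x n (y + e)) <= 1)
      by (destruct Z.eq_dec; [lra|apply IH]).
    nra.
Qed.

Definition Qesc x w := exists d, 0 < d /\ forall n, hitF Gamma lam x n w <= 1 - d.

Lemma Qesc_prop x w e : e <> 0%Z -> 0 < lam e w -> (w + e)%Z <> x -> Qesc x (w + e) -> Qesc x w.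
Proof.
  intros He Hl Hx [d [Hd Hn]].
  assert (Hin : In e Gamma).
  { destruct (classic (In e Gamma)) as [H|H]; auto. rewrite hGamma in Hl; auto. lra. }
  assert (Hq : lam e w <= qrate Gamma lam w).
  { unfold qrate.
    pose proof (sumL_single Gamma (fun eta => if Z.eq_dec eta 0 then 0 else lam eta w) e Hin) as H.
    simpl in H. destruct Z.eq_dec; [contradiction|]. apply H. intros; destruct Z.eq_dec; auto; lra. }
  assert (Hq0 : 0 < qrate Gamma lam w) by lra.
  assert (Hd1 : d <= 1) by (pose proof (Hn O); simpl in *; lra).
  assert (Hp : 0 < lam e w / qrate Gamma lam w) by (apply Rdiv_lt_0_compat; lra).
  assert (Hp1 : lam e w / qrate Gamma lam w <= 1).
  { apply (Rmult_le_reg_r (qrate Gamma lam w)); auto. field_simplify; lra. }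
  exists (d * (lam e w / qrate Gamma lam w)). split. nra.
  intros [|n]. simpl. nra.
  simpl.
  rewrite <- (sum_p_1 w Hq0) at 1.
  set (T := fun eta => (if Z.eq_dec eta 0 then 0 else lam eta w / qrate Gamma lam w) -
     (if Z.eq_dec eta 0 then 0 else
      lam eta w / qrate Gamma lam w *
      (if Z.eq_dec (w + eta) x then 1 else hitF Gamma lam x n (w + eta)))).
  assert (HT : sumL Gamma T = sumL Gamma (fun e0 : Z => if Z.eq_dec e0 0 then 0 else lam e0 w / qrate Gamma lam w) - sumL Gamma
    (fun eta : Z =>
     if Z.eq_dec eta 0
     then 0
     else
      lam eta w / qrate Gamma lam w *
      (if Z.eq_dec (w + eta) x then 1 else hitF Gamma lam x n (w + eta)))) by (apply sumL_minus).
  assert (Hsum : T e <= sumL Gamma T).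
  { apply sumL_single; auto. intros e' _. unfold T. destruct Z.eq_dec; [lra|].
    assert (0 <= lam e' w / qrate Gamma lam w) by (apply Rmult_le_pos; auto using inv_q_nonneg).
    assert ((if Z.eq_dec (w + e') x then 1 else hitF Gamma lam x n (w + e')) <= 1)
      by (destruct Z.eq_dec; [lra|apply hit_bounds]).
    nra. }
  assert (HTe : T e = lam e w / qrate Gamma lam w - lam e w / qrate Gamma lam w * hitF Gamma lam x n (w + e))
    by (unfold T; destruct Z.eq_dec; [contradiction|]; destruct Z.eq_dec; [contradiction|]; ring).
  rewrite HTe, HT in Hsum.
  pose proof (Hn n). nra.
Qed.

Lemma Qesc_reach x w : reach lam x w -> Qesc x w -> Qesc x x.
Proof.
  induction 1 as [|y eta Hr IH Heta Hl]; auto.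
  intros HQ. destruct (Z.eq_dec (y + eta) x) as [E|E].
  - rewrite E in HQ. exact HQ.
  - apply IH. eapply Qesc_prop; eauto.
Qed.

End Prob.

Lemma hit_bound (S : Z -> Prop) (Gamma : list Z) (lam : Z -> Z -> R)
  (hlam_nonneg : forall eta x, 0 <= lam eta x)
  (hlam_S : forall eta x, S x -> ~ S (x + eta)%Z -> lam eta x = 0)
  (x M : Z) (G : Z -> R) (HxM : (x < M)%Z) (HS : S x)
  (HG0 : forall z, S z -> 0 <= G z)
  (HG1 : forall z, S z -> (z < M)%Z -> 1 <= G z)
  (HGs : forall y, S y -> (M <= y)%Z ->
     sumL Gamma (fun e => if Z.eq_dec e 0 then 0 else lam e y / qrate Gamma lam y * G (y + e)%Z) <= G y) :
  forall n y, S y -> (M <= y)%Z -> hitF Gamma lam x n y <= G y.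
Proof.
  induction n as [|n IH]; intros y Hy HMy; simpl. apply HG0; auto.
  eapply Rle_trans; [|apply HGs; auto]. apply sumL_le. intros e _.
  destruct Z.eq_dec; [lra|].
  assert (Hp : 0 <= lam e y / qrate Gamma lam y) by (apply Rmult_le_pos; auto using inv_q_nonneg).
  destruct (Req_dec (lam e y) 0) as [H0|H0].
  { rewrite H0. unfold Rdiv. rewrite !Rmult_0_l. lra. }
  assert (HSe : S (y + e)%Z).
  { destruct (classic (S (y+e)%Z)) as [H|H]; auto. exfalso. apply H0. apply hlam_S; auto. }
  apply Rmult_le_compat_l; auto.
  destruct Z.eq_dec as [E|E].
  - apply HG1; auto. lia.
  - destruct (Z_lt_le_dec (y + e) M).
    + pose proof (hit_bounds Gamma lam hlam_nonneg x n (y + e)). pose proof (HG1 _ HSe l). lra.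
    + apply IH; auto.
Qed.

Lemma gen_ineq (Gamma : list Z) (lam : Z -> Z -> R) (K c : R) (yz : Z)
  (hlam_nonneg : forall eta x, 0 <= lam eta x)
  (HK : forall e, In e Gamma -> Rabs (IZR e) <= K)
  (HK0 : 0 <= K) (Hy : 0 < IZR yz) (HL : 1 <= ln (IZR yz)) (HLam : 1 <= ln (ln (IZR yz)))
  (Hk : K / IZR yz <= 1/8)
  (Hv : 0 < halfvar Gamma lam yz) (HH : c <= H1 Gamma lam yz)
  (Hq : 2*(K/IZR yz)*ln (IZR yz) + (1+4*(K/IZR yz))*(1+K/IZR yz)^2 + 16*(1+K/IZR yz)^2/ln(ln (IZR yz)) <= c) :
  sumL Gamma (fun e => lam e yz * (/ ln (ln (IZR yz + IZR e)) - / ln (ln (IZR yz)))) <= 0.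
Proof.
  set (Y := IZR yz) in *. set (L := ln Y) in *. set (Lam := ln L) in *. set (k := K / Y) in *.
  set (B := (1/2+k)/(L*Lam^2) + (1/2+2*k)*(1+k)^2/(L^2*Lam^2) + 8*(1+k)^2/(L^2*Lam^3)).
  eapply Rle_trans.
  { apply sumL_le with (g := fun e => lam e yz * (- (IZR e / Y) / (L * Lam^2) + (IZR e / Y)^2 * B)).
    intros e He. apply Rmult_le_compat_l; auto. apply core; auto. }
  rewrite (sumL_ext Gamma _ (fun e => IZR e * lam e yz * (- / (Y * L * Lam^2)) + IZR e ^2 * lam e yz * (B / Y^2))).
  2:{ intros e _. field. split; [lra|]. split; [lra|]. lra. }
  rewrite sumL_plus, !sumL_scal.
  fold (drift Gamma lam yz).
  assert (Hv2 : sumL Gamma (fun e => IZR e ^ 2 * lam e yz) = 2 * halfvar Gamma lam yz)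
    by (unfold halfvar; field).
  rewrite Hv2.
  set (m := drift Gamma lam yz) in *. set (v := halfvar Gamma lam yz) in *.
  assert (HmH : L * (m * Y - v) >= c * v).
  { unfold H1 in HH. fold m v Y L in HH.
    apply Rle_ge. apply (Rmult_le_reg_r (/ v)). apply Rinv_0_lt_compat; lra.
    replace (L * (m * Y - v) * / v) with (L * (m * Y - v) / v) by reflexivity.
    replace (c * v * / v) with c by (field; lra). exact HH. }
  set (X := m * - / (Y * L * Lam ^ 2) + 2 * v * (B / Y ^ 2)).
  assert (HX : X * (Y^2 * L^2 * Lam^2) = - m * Y * L + v * ((1+2*k)*L + (1+4*k)*(1+k)^2 + 16*(1+k)^2/Lam)).
  { unfold X, B. field. split; lra. }
  assert (Hpos : 0 < Y^2 * L^2 * Lam^2) by (apply Rmult_lt_0_compat; [apply Rmult_lt_0_compat|]; nra).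
  assert (Hk0 : 0 <= k).
  { unfold k. apply Rmult_le_pos; auto. left; apply Rinv_0_lt_compat; lra. }
  assert (X * (Y^2 * L^2 * Lam^2) <= 0).
  { rewrite HX. nra. }
  nra.
Qed.

Lemma ln_le_sqrt (Y : R) : 0 < Y -> ln Y <= 2 * sqrt Y.
Proof.
  intro HY. assert (Hs : 0 < sqrt Y) by (apply sqrt_lt_R0; lra).
  rewrite <- (sqrt_sqrt Y) at 1 by lra. rewrite ln_mult by lra.
  pose proof (ln1p_le (sqrt Y - 1) ltac:(lra)). replace (1 + (sqrt Y - 1)) with (sqrt Y) in H by ring.
  lra.
Qed.

Lemma large (K d Y : R) : 0 <= K -> 0 < d ->
  exp (exp (Rmax 1 (96/d))) <= Y -> 30*K/d + 8*K <= Y -> (12*K/d)^2 <= Y ->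
  0 < Y /\ 1 <= ln Y /\ 1 <= ln (ln Y) /\ K / Y <= 1/8 /\
  2*(K/Y)*ln Y + (1+4*(K/Y))*(1+K/Y)^2 + 16*(1+K/Y)^2/ln(ln Y) <= 1 + d.
Proof.
  intros HK Hd H1 H2 H3.
  set (A := Rmax 1 (96/d)) in *.
  assert (HA1 : 1 <= A) by apply Rmax_l.
  assert (HA2 : 96/d <= A) by apply Rmax_r.
  assert (HY : 0 < Y) by (pose proof (exp_pos (exp A)); lra).
  assert (HL : exp A <= ln Y) by (rewrite <- (ln_exp (exp A)); apply ln_le; [apply exp_pos|auto]).
  pose proof (exp_ineq1_le A).
  assert (HLam : A <= ln (ln Y)) by (rewrite <- (ln_exp A); apply ln_le; [apply exp_pos|auto]).
  set (L := ln Y) in *. set (Lam := ln L) in *.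
  set (k := K / Y).
  assert (Hk0 : 0 <= k) by (unfold k; apply Rmult_le_pos; auto; left; apply Rinv_0_lt_compat; lra).
  assert (HkY : k * Y = K) by (unfold k; field; lra).
  assert (H30 : 0 <= 30 * K / d) by (apply Rmult_le_pos; [lra|left; apply Rinv_0_lt_compat; lra]).
  assert (Hk8 : k <= 1/8) by nra.
  assert (Hkd : k <= d/30).
  { assert (30 * K <= d * Y).
    { assert (30 * K / d * d = 30 * K) by (field; lra). nra. }
    nra. }
  set (s := sqrt Y).
  assert (Hs : 0 < s) by (apply sqrt_lt_R0; lra).
  assert (Hss : s * s = Y) by (apply sqrt_sqrt; lra).
  assert (HLs : L <= 2 * s) by (apply ln_le_sqrt; lra).
  assert (Hs12 : 12 * K / d <= s).
  { unfold s. rewrite <- (sqrt_pow2 (12*K/d)).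
    apply sqrt_le_1_alt. lra. apply Rmult_le_pos; [lra|left; apply Rinv_0_lt_compat; lra]. }
  assert (Hds : 12 * K <= d * s).
  { assert (12 * K / d * d = 12 * K) by (field; lra). nra. }
  assert (H2kL : 2 * k * L <= d / 3).
  { assert (2 * k * L <= 4 * k * s) by nra.
    assert (k * s * s = K) by nra.
    assert (4 * k * s * s <= d / 3 * s) by nra.
    nra. }
  assert (HLamd : 32 / Lam <= d / 3).
  { assert (96 <= A * d) by (assert (96 / d * d = 96) by (field; lra); nra).
    assert (0 < Lam) by lra.
    apply (Rmult_le_reg_r Lam); auto. unfold Rdiv. rewrite Rmult_assoc, Rinv_l by lra. nra. }
  assert (Hq1 : (1+4*k)*(1+k)^2 <= 1 + 10 * k) by nra.
  assert (Hq2 : 16*(1+k)^2/Lam <= 32 / Lam).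
  { unfold Rdiv. apply Rmult_le_compat_r. left; apply Rinv_0_lt_compat; lra. nra. }
  repeat split; try lra.
Qed.

Theorem mainTheorem9
  (S : Z -> Prop) (Gamma : list Z) (lam : Z -> Z -> R)
  (hS_nonneg : forall x, S x -> (0 <= x)%Z)
  (hS_inf : forall N : Z, exists x, S x /\ (N <= x)%Z)
  (hGamma_nodup : NoDup Gamma)
  (hGamma : forall eta x, ~ In eta Gamma -> lam eta x = 0)
  (hlam_nonneg : forall eta x, 0 <= lam eta x)
  (hlam_S : forall eta x, S x -> ~ S (x + eta)%Z -> lam eta x = 0)
  (hv_pos : forall x, S x -> 0 < halfvar Gamma lam x)
  (hirr : irreducible S lam)
  (hliminf : exists c, 1 < c /\ exists N : Z,
      forall x, S x -> (N <= x)%Z -> c <= H1 Gamma lam x) :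
  transient S Gamma lam.
Proof.
  intros x Hx.
  destruct hliminf as [c [Hc [N HN]]].
  set (d := c - 1).
  assert (Hd : 0 < d) by (unfold d; lra).
  set (K := 1 + sumL Gamma (fun e => Rabs (IZR e))).
  assert (HK : forall e, In e Gamma -> Rabs (IZR e) <= K).
  { intros e He. unfold K.
    pose proof (sumL_single Gamma (fun e => Rabs (IZR e)) e He (fun e' _ => Rabs_pos _)). simpl in H. lra. }
  assert (HK0 : 0 <= K).
  { unfold K. pose proof (sumL_nonneg Gamma (fun e => Rabs (IZR e)) (fun e' _ => Rabs_pos _)). lra. }
  set (Y0 := Rmax (IZR N) (Rmax (exp (exp (Rmax 1 (96/d)))) (Rmax (30*K/d + 8*K) ((12*K/d)^2)))).
  assert (HY0 : forall T, Y0 <= T ->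
     (IZR N <= T)%R /\ 0 < T /\ 1 <= ln T /\ 1 <= ln (ln T) /\ K / T <= 1/8 /\
     2*(K/T)*ln T + (1+4*(K/T))*(1+K/T)^2 + 16*(1+K/T)^2/ln(ln T) <= 1 + d).
  { intros T HT. unfold Y0 in HT.
    pose proof (Rmax_l (IZR N) (Rmax (exp (exp (Rmax 1 (96/d)))) (Rmax (30*K/d + 8*K) ((12*K/d)^2)))).
    pose proof (Rmax_r (IZR N) (Rmax (exp (exp (Rmax 1 (96/d)))) (Rmax (30*K/d + 8*K) ((12*K/d)^2)))).
    pose proof (Rmax_l (exp (exp (Rmax 1 (96/d)))) (Rmax (30*K/d + 8*K) ((12*K/d)^2))).
    pose proof (Rmax_r (exp (exp (Rmax 1 (96/d)))) (Rmax (30*K/d + 8*K) ((12*K/d)^2))).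
    pose proof (Rmax_l (30*K/d + 8*K) ((12*K/d)^2)).
    pose proof (Rmax_r (30*K/d + 8*K) ((12*K/d)^2)).
    split. lra. apply large; auto; lra. }
  assert (HY0p : 0 < Y0) by (destruct (HY0 Y0 (Rle_refl _)) as [_ [? _]]; auto).
  set (fL := fun z : Z => if Rle_dec Y0 (IZR z) then / ln (ln (IZR z)) else / ln (ln Y0)).
  assert (HlnlnY0 : 1 <= ln (ln Y0)) by (destruct (HY0 Y0 (Rle_refl _)) as [_ [_ [_ [? _]]]]; auto).
  assert (HfLpos : forall z, 0 < fL z).
  { intros z. unfold fL. destruct Rle_dec.
    - destruct (HY0 (IZR z) r) as [_ [_ [_ [? _]]]]. apply Rinv_0_lt_compat; lra.
    - apply Rinv_0_lt_compat; lra. }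
  assert (Hlnln_mono : forall a b, Y0 <= a -> a <= b -> ln (ln a) <= ln (ln b)).
  { intros a b Ha Hab. destruct (HY0 a Ha) as [_ [? [? _]]].
    apply ln_le; [lra|]. apply ln_le; lra. }
  assert (Hlnln_smono : forall a b, Y0 <= a -> a < b -> ln (ln a) < ln (ln b)).
  { intros a b Ha Hab. destruct (HY0 a Ha) as [_ [? [? _]]].
    apply ln_increasing; [lra|]. apply ln_increasing; lra. }
  assert (HfLmono : forall z1 z2, (z1 <= z2)%Z -> fL z2 <= fL z1).
  { intros z1 z2 Hz. apply IZR_le in Hz. unfold fL.
    destruct (Rle_dec Y0 (IZR z1)); destruct (Rle_dec Y0 (IZR z2)); try lra.
    - destruct (HY0 _ r) as [_ [_ [_ [? _]]]]. apply Rinv_le_contravar; [lra|]. apply Hlnln_mono; auto.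
    - apply Rinv_le_contravar; [lra|]. apply Hlnln_mono; lra. }
  set (M := Z.max (up (Y0 + K)) (x + 1)).
  assert (HM : Y0 + K < IZR M).
  { destruct (archimed (Y0 + K)) as [H _]. apply Rlt_le_trans with (IZR (up (Y0 + K))); [lra|].
    apply IZR_le. unfold M. lia. }
  set (G := fun z => fL z / fL M).
  assert (Hbound : forall n y, S y -> (M <= y)%Z -> hitF Gamma lam x n y <= G y).
  { apply hit_bound with (S := S); auto.
    - unfold M. lia.
    - intros z _. unfold G. apply Rlt_le, Rdiv_lt_0_compat; auto.
    - intros z _ Hz. unfold G. apply (Rmult_le_reg_r (fL M)); auto.
      unfold Rdiv. rewrite Rmult_assoc, Rinv_l by (apply Rgt_not_eq, HfLpos). rewrite Rmult_1_l, Rmult_1_r.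
      apply HfLmono. lia.
    - intros y Hy HMy.
      set (Y := IZR y).
      assert (HYY : Y0 + K <= Y) by (apply IZR_le in HMy; unfold Y; lra).
      destruct (HY0 Y ltac:(lra)) as [HNY [HYp [HL [HLam [Hk Hqt]]]]].
      assert (Hvq : 2 * halfvar Gamma lam y <= K^2 * qrate Gamma lam y).
      { unfold halfvar, qrate. replace (2 * (/2 * sumL Gamma (fun eta => IZR eta ^ 2 * lam eta y)))
          with (sumL Gamma (fun eta => IZR eta ^ 2 * lam eta y)) by field.
        rewrite Rmult_comm, <- sumL_scal. apply sumL_le. intros e He.
        destruct Z.eq_dec as [E|E].
        - subst. simpl. lra.
        - pose proof (HK e He). pose proof (Rabs_pos (IZR e)).
          rewrite <- (pow2_abs (IZR e)). pose proof (hlam_nonneg e y).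
          assert (Rabs (IZR e) ^ 2 <= K^2) by nra. nra. }
      assert (Hq0 : 0 < qrate Gamma lam y).
      { pose proof (hv_pos y Hy). pose proof (q_nonneg Gamma lam hlam_nonneg y).
        destruct H0 as [H0|H0]; auto. rewrite <- H0 in Hvq. lra. }
      assert (HNy : (N <= y)%Z) by (apply le_IZR; unfold Y in HNY; lra).
      assert (Hgen : sumL Gamma (fun e => lam e y * (/ ln (ln (Y + IZR e)) - / ln (ln Y))) <= 0).
      { apply (gen_ineq Gamma lam K c y); try assumption.
        all: unfold Y in *. all: try lra. all: try (apply HN; assumption). all: try (unfold d in Hqt; lra). all: try (apply hv_pos; assumption). }
      assert (Hext : sumL Gamma (fun e => lam e y * (fL (y+e)%Z - fL y)) =
                     sumL Gamma (fun e => lam e y * (/ ln (ln (Y + IZR e)) - / ln (ln Y)))).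
      { apply sumL_ext. intros e He.
        assert (-K <= IZR e) by (pose proof (HK e He); pose proof (Rle_abs (- IZR e));
          rewrite Rabs_Ropp in H0; lra).
        unfold fL. rewrite plus_IZR. fold Y.
        destruct (Rle_dec Y0 (Y + IZR e)); [|lra]. destruct (Rle_dec Y0 Y); [|lra]. reflexivity. }
      idtac.
      assert (HGy : G y = sumL Gamma (fun e => (if Z.eq_dec e 0 then 0 else lam e y / qrate Gamma lam y) * G y)).
      { rewrite sumL_scal, sum_p_1; auto. ring. }
      assert (Eq : sumL Gamma (fun e => if Z.eq_dec e 0 then 0 else lam e y / qrate Gamma lam y * G (y + e)%Z)
          - sumL Gamma (fun e => (if Z.eq_dec e 0 then 0 else lam e y / qrate Gamma lam y) * G y)
          = sumL Gamma (fun e => lam e y * (fL (y+e)%Z - fL y)) * (/ qrate Gamma lam y * / fL M)).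
      { rewrite <- sumL_minus, <- sumL_scal. apply sumL_ext. intros e _. unfold G.
        destruct Z.eq_dec as [E|E].
        - subst. rewrite Z.add_0_r. ring.
        - unfold Rdiv. ring. }
      rewrite Hext in Eq.
      assert (0 <= / qrate Gamma lam y * / fL M).
      { apply Rmult_le_pos; left; apply Rinv_0_lt_compat; auto. }
      assert (Hprod : sumL Gamma (fun e => lam e y * (/ ln (ln (Y + IZR e)) - / ln (ln Y))) * (/ qrate Gamma lam y * / fL M) <= 0).
      { nra. }
      lra. }
  destruct (hS_inf (M+1)%Z) as [y1 [Hy1 Hy1M]].
  assert (HG1 : G y1 < 1).
  { assert (HfL : fL y1 < fL M).
    { assert (HMy1 : IZR M < IZR y1) by (apply IZR_lt; lia).
      unfold fL. destruct (Rle_dec Y0 (IZR y1)); [|lra]. destruct (Rle_dec Y0 (IZR M)); [|lra].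
      destruct (HY0 _ r0) as [_ [_ [_ [? _]]]].
      apply Rinv_lt_contravar. apply Rmult_lt_0_compat; try lra.
      pose proof (Hlnln_smono _ _ r0 HMy1). lra. apply Hlnln_smono; auto. }
    unfold G. apply (Rmult_lt_reg_r (fL M)); auto. unfold Rdiv.
    rewrite Rmult_assoc, Rinv_l by (apply Rgt_not_eq, HfLpos). lra. }
  assert (HQ : Qesc Gamma lam x y1).
  { exists (1 - G y1). split; [lra|]. intros n. pose proof (Hbound n y1 Hy1 ltac:(lia)). lra. }
  destruct (Qesc_reach Gamma lam hlam_nonneg hGamma x y1 (hirr x y1 Hx Hy1) HQ) as [dl [Hdl Hn]].
  unfold return_prob. apply Rbar_le_lt_trans with (Finite (1 - dl)).
  - replace (Finite (1 - dl)) with (Lim_seq (fun _ => 1 - dl)) by apply Lim_seq_const.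
    apply Lim_seq_le_loc. exists O. intros; apply Hn.
  - simpl; lra.
Qed.
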